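(* Let $(X,d)$ be a locally compact, geodesically complete CAT(0)-space connected at infinity, and let $d'$ be a metric on $X$ such that $(X,d')$ is a locally compact geodesically complete CAT(0)-space and, for all $x,y\in X$, $d(x,y)\le 1\iff d'(x,y)\le 1$. Then for every $n\in\mathbb N$ and all $x,y\in X$: $d(x,y)\le n\iff d'(x,y)\le n$, $d(x,y)=n\iff d'(x,y)=n$, and $d(x,y)<n\iff d'(x,y)<n$.
   Context: Geodesically complete: geodesic, and every geodesic segment lies in a complete geodesic. Connected at infinity: the complement of every metric ball is path connected. *)

(* Defs.v *)
From Stdlib Require Import Reals List.
Open Scope R_scope.

Definition is_metric {X : Type} (d : X -> X -> R) : Prop :=
  (forall x y, 0 <= d x y) /\
  (forall x y, d x y = 0 <-> x = y) /\
  (forall x y, d x y = d y x) /\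
  (forall x y z, d x z <= d x y + d y z).

Definition isometric_on {X : Type} (d : X -> X -> R) (c : R -> X) (L : R) : Prop :=
  forall s t, 0 <= s <= L -> 0 <= t <= L -> d (c s) (c t) = Rabs (s - t).

Definition geodesic_seg {X : Type} (d : X -> X -> R) (x y : X) (c : R -> X) : Prop :=
  c 0 = x /\ c (d x y) = y /\ isometric_on d c (d x y).

Definition geodesic_space {X : Type} (d : X -> X -> R) : Prop :=
  is_metric d /\ forall x y, exists c, geodesic_seg d x y c.

Definition geodesic_line {X : Type} (d : X -> X -> R) (g : R -> X) : Prop :=
  forall s t, d (g s) (g t) = Rabs (s - t).

Definition geodesically_complete {X : Type} (d : X -> X -> R) : Prop :=
  geodesic_space d /\
  forall (c : R -> X) (L : R), 0 < L -> isometric_on d c L ->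
    exists g, geodesic_line d g /\ forall t, 0 <= t <= L -> g t = c t.

Definition edist (p q : R * R) : R :=
  sqrt ((fst p - fst q) ^ 2 + (snd p - snd q) ^ 2).

(* point of the segment [a,b] at distance s from a, for a segment of length L *)
Definition eseg (a b : R * R) (L s : R) : R * R :=
  if Req_dec_T L 0 then a
  else (fst a + (s / L) * (fst b - fst a), snd a + (s / L) * (snd b - snd a)).

(* A side of a geodesic triangle together with its comparison side:
   start point u, end point v, geodesic c from u to v, comparison points ub vb. *)
Record side (X : Type) := Side { s_u : X; s_v : X; s_c : R -> X; s_ub : R * R; s_vb : R * R }.
Arguments Side {X}.
Arguments s_u {X}. Arguments s_v {X}. Arguments s_c {X}.
Arguments s_ub {X}. Arguments s_vb {X}.

(* CAT(0): geodesic, and for every geodesic triangle and every comparison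
   triangle in the Euclidean plane, the distance between any two points of the
   triangle is at most the distance of their comparison points. *)
Definition CAT0 {X : Type} (d : X -> X -> R) : Prop :=
  geodesic_space d /\
  forall (x y z : X) (cxy cyz czx : R -> X) (xb yb zb : R * R),
    geodesic_seg d x y cxy -> geodesic_seg d y z cyz -> geodesic_seg d z x czx ->
    edist xb yb = d x y -> edist yb zb = d y z -> edist zb xb = d z x ->
    forall S1 S2 : side X,
      In S1 (Side x y cxy xb yb :: Side y z cyz yb zb :: Side z x czx zb xb :: nil) ->
      In S2 (Side x y cxy xb yb :: Side y z cyz yb zb :: Side z x czx zb xb :: nil) ->
      forall s t,
        0 <= s <= d (s_u S1) (s_v S1) -> 0 <= t <= d (s_u S2) (s_v S2) ->
        d (s_c S1 s) (s_c S2 t) <=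
        edist (eseg (s_ub S1) (s_vb S1) (d (s_u S1) (s_v S1)) s)
              (eseg (s_ub S2) (s_vb S2) (d (s_u S2) (s_v S2)) t).

Definition ball {X : Type} (d : X -> X -> R) (x : X) (r : R) : X -> Prop :=
  fun y => d x y < r.

Definition open_set {X : Type} (d : X -> X -> R) (U : X -> Prop) : Prop :=
  forall x, U x -> exists e, 0 < e /\ forall y, ball d x e y -> U y.

Definition compact_set {X : Type} (d : X -> X -> R) (K : X -> Prop) : Prop :=
  forall (I : Type) (U : I -> X -> Prop),
    (forall i, open_set d (U i)) -> (forall x, K x -> exists i, U i x) ->
    exists l : list I, forall x, K x -> exists i, In i l /\ U i x.

Definition locally_compact {X : Type} (d : X -> X -> R) : Prop :=
  forall x, exists K, compact_set d K /\ exists e, 0 < e /\ forall y, ball d x e y -> K y.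

Definition path_in {X : Type} (d : X -> X -> R) (A : X -> Prop) (a b : X) (p : R -> X) : Prop :=
  p 0 = a /\ p 1 = b /\ (forall t, 0 <= t <= 1 -> A (p t)) /\
  forall t, 0 <= t <= 1 -> forall eps, 0 < eps ->
    exists delta, 0 < delta /\
      forall s, 0 <= s <= 1 -> Rabs (s - t) < delta -> d (p s) (p t) < eps.

Definition path_connected {X : Type} (d : X -> X -> R) (A : X -> Prop) : Prop :=
  forall a b, A a -> A b -> exists p, path_in d A a b p.

Definition connected_at_infinity {X : Type} (d : X -> X -> R) : Prop :=
  forall x r, path_connected d (fun y => ~ ball d x r y).

(* Main.v *)
Require Import Defs.
From Stdlib Require Import Reals Lra List.
Open Scope R_scope.

Fixpoint reach {X} (E : X -> X -> Prop) (n : nat) (x y : X) : Prop :=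
  match n with 0%nat => x = y | S n => exists z, E x z /\ reach E n z y end.

Lemma reach_iff {X} (E E' : X -> X -> Prop) :
  (forall a b, E a b <-> E' a b) -> forall n x y, reach E n x y <-> reach E' n x y.
Proof.
  intros HE n; induction n as [|n IH]; intros x y; simpl; [tauto|].
  split; intros [z [H1 H2]]; exists z; split; try apply HE; auto; apply IH; auto.
Qed.

Lemma seg_dist {X} (d : X -> X -> R) x y c s t :
  geodesic_seg d x y c -> 0 <= s <= d x y -> 0 <= t <= d x y ->
  d (c s) (c t) = Rabs (s - t).
Proof. intros [_ [_ H]] Hs Ht; apply H; auto. Qed.

Lemma le_reach {X} (d : X -> X -> R) : is_metric d -> geodesic_space d ->
  forall n x y, d x y <= INR n <-> reach (fun a b => d a b <= 1) n x y.
Proof.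
  intros Hm [_ Hg] n; destruct Hm as [H0 [Hz [Hs Ht]]].
  induction n as [|n IH]; intros x y; simpl reach.
  - simpl; split; intro H.
    + apply Hz; pose proof (H0 x y); lra.
    + subst; rewrite (proj2 (Hz y y) eq_refl); lra.
  - rewrite S_INR; split.
    + intro H. destruct (Hg x y) as [c Hc].
      pose proof (H0 x y) as Hxy.
      set (p := Rmin 1 (d x y)).
      assert (Hp : 0 <= p <= d x y /\ p <= 1 /\ d x y - p <= INR n).
      { pose proof (pos_INR n). unfold p, Rmin; destruct Rle_dec; lra. }
      destruct Hc as [Hc0 [Hc1 Hc2]].
      assert (A1 : d (c 0) (c p) = Rabs (0 - p)) by (apply Hc2; lra).
      assert (A2 : d (c p) (c (d x y)) = Rabs (p - d x y)) by (apply Hc2; lra).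
      rewrite Hc0 in A1. rewrite Hc1 in A2.
      exists (c p). split.
      * rewrite A1, Rabs_left1; lra.
      * apply IH. rewrite A2, Rabs_left1; lra.
    + intros [z [H1 H2]]. apply IH in H2. pose proof (Ht x z y); lra.
Qed.

Lemma uniq {X} (d : X -> X -> R) : is_metric d -> CAT0 d ->
  forall x y z c, geodesic_seg d y x c -> d x z + d z y = d x y -> z = c (d z y).
Proof.
  intros Hm [Hg Hc] x y z c Hcs Heq.
  destruct Hg as [_ Hgeo].
  destruct Hm as [H0 [Hz [Hsym Ht]]].
  destruct (Hgeo x z) as [c1 Hc1]. destruct (Hgeo z y) as [c2 Hc2].
  pose proof (H0 x z) as Ha. pose proof (H0 z y) as Hb.
  assert (E1 : edist (0,0) (d x z,0) = d x z).
  { unfold edist; cbn [fst snd]. replace ((0 - d x z) ^ 2 + (0 - 0) ^ 2) with (d x z * d x z) by ring.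
    apply sqrt_square; lra. }
  assert (E2 : edist (d x z,0) (d x z + d z y,0) = d z y).
  { unfold edist; cbn [fst snd]. replace ((d x z - (d x z + d z y)) ^ 2 + (0 - 0) ^ 2) with (d z y * d z y) by ring.
    apply sqrt_square; lra. }
  assert (E3 : edist (d x z + d z y,0) (0,0) = d y x).
  { unfold edist; cbn [fst snd]. replace ((d x z + d z y - 0) ^ 2 + (0 - 0) ^ 2) with (d y x * d y x).
    apply sqrt_square; rewrite Hsym; lra. rewrite Hsym, <- Heq; ring. }
  pose proof (Hc x z y c1 c2 c (0,0) (d x z,0) (d x z + d z y,0) Hc1 Hc2 Hcs E1 E2 E3
     (Side x z c1 (0,0) (d x z,0)) (Side y x c (d x z + d z y,0) (0,0))
     ltac:(simpl; auto) ltac:(simpl; auto 6) (d x z) (d z y)) as H.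
  cbn [s_c s_u s_v s_ub s_vb] in H.
  rewrite (Hsym y x) in H.
  specialize (H ltac:(lra) ltac:(lra)).
  destruct Hc1 as [_ [Hc1 _]]. rewrite Hc1 in H.
  assert (EE : eseg (0, 0) (d x z, 0) (d x z) (d x z) =
               eseg (d x z + d z y, 0) (0, 0) (d x y) (d z y)).
  { rewrite <- Heq. unfold eseg.
    destruct (Req_dec_T (d x z) 0) as [e1|e1];
    destruct (Req_dec_T (d x z + d z y) 0) as [e2|e2]; simpl.
    - f_equal; lra.
    - f_equal; [|field; auto]. rewrite e1 in *. field. lra.
    - lra.
    - f_equal; field; auto. }
  rewrite EE in H. unfold edist in H.
  replace ((fst (eseg (d x z + d z y, 0) (0, 0) (d x y) (d z y)) -
              fst (eseg (d x z + d z y, 0) (0, 0) (d x y) (d z y))) ^ 2 +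
             (snd (eseg (d x z + d z y, 0) (0, 0) (d x y) (d z y)) -
              snd (eseg (d x z + d z y, 0) (0, 0) (d x y) (d z y))) ^ 2) with 0 in H by ring.
  rewrite sqrt_0 in H. apply Hz. pose proof (H0 z (c (d z y))). lra.
Qed.

Lemma eq2 {X} (d : X -> X -> R) : is_metric d -> CAT0 d -> forall m x y,
  d x y = INR (S (S m)) <->
  (d x y <= INR (S (S m)) /\ x <> y /\
   ~ exists z1 z2, z1 <> z2 /\ d x z1 <= 1 /\ d x z2 <= 1 /\
       d z1 y <= INR (S m) /\ d z2 y <= INR (S m)).
Proof.
  intros Hm Hcat m x y.
  pose proof Hm as [H0 [Hz [Hsym Ht]]].
  pose proof Hcat as [[_ Hgeo] _].
  rewrite (S_INR (S m)). pose proof (pos_INR m). rewrite (S_INR m).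
  split.
  - intro E. split; [lra|split].
    + intro ex; subst. rewrite (proj2 (Hz y y) eq_refl) in E; lra.
    + intros [z1 [z2 [Hne [A1 [A2 [B1 B2]]]]]].
      destruct (Hgeo y x) as [c Hc].
      pose proof (Ht x z1 y). pose proof (Ht x z2 y).
      assert (U1 := uniq d Hm Hcat x y z1 c Hc ltac:(lra)).
      assert (U2 := uniq d Hm Hcat x y z2 c Hc ltac:(lra)).
      assert (d z1 y = d z2 y) as Eq by lra.
      apply Hne. rewrite U1, U2, Eq. reflexivity.
  - intros [Hle [Hne Hno]].
    destruct (Req_dec (d x y) (INR m + 1 + 1)) as [e|e]; [auto|exfalso].
    apply Hno.
    set (t := d x y) in *.
    assert (tpos : 0 < t).
    { destruct (Req_dec t 0) as [e0|e0]; [apply Hz in e0; contradiction|].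
      pose proof (H0 x y); unfold t in *; lra. }
    destruct (Hgeo x y) as [c [Hc0 [Hc1 Hc2]]].
    set (a := Rmax 0 (t - (INR m + 1))).
    set (b := Rmin 1 t).
    assert (Hab : 0 <= a < b /\ b <= t /\ b <= 1 /\ a <= 1 /\ t - b <= INR m + 1 /\ t - a <= INR m + 1).
    { unfold a, b, Rmax, Rmin; destruct Rle_dec; destruct Rle_dec; lra. }
    assert (A1 : d (c 0) (c b) = Rabs (0 - b)) by (apply Hc2; unfold t in *; lra).
    assert (A2 : d (c 0) (c a) = Rabs (0 - a)) by (apply Hc2; unfold t in *; lra).
    assert (A3 : d (c b) (c (d x y)) = Rabs (b - d x y)) by (apply Hc2; unfold t in *; lra).
    assert (A4 : d (c a) (c (d x y)) = Rabs (a - d x y)) by (apply Hc2; unfold t in *; lra).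
    assert (A5 : d (c b) (c a) = Rabs (b - a)) by (apply Hc2; unfold t in *; lra).
    rewrite Hc0 in A1, A2. rewrite Hc1 in A3, A4.
    exists (c b), (c a). split; [|split; [|split; [|split]]].
    + intro E. rewrite E, (proj2 (Hz _ _) eq_refl) in A5.
      rewrite Rabs_right in A5; lra.
    + rewrite A1, Rabs_left1; lra.
    + rewrite A2, Rabs_left1; lra.
    + rewrite A3, Rabs_left1; unfold t in *; lra.
    + rewrite A4, Rabs_left1; unfold t in *; lra.
Qed.

Lemma eq1 {X} (d : X -> X -> R) : is_metric d -> geodesically_complete d -> forall x y,
  d x y = 1 <-> (d x y <= 1 /\ exists z, d x z = INR 2 /\ d z y <= 1).
Proof.
  intros Hm [[_ Hgeo] Hext] x y.
  pose proof Hm as [H0 [Hz [Hsym Ht]]].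
  replace (INR 2) with 2 by (simpl; ring).
  split.
  - intro E. split; [lra|].
    destruct (Hgeo x y) as [c [Hc0 [Hc1 Hc2]]].
    rewrite E in Hc1, Hc2.
    destruct (Hext c 1 ltac:(lra) Hc2) as [g [Hg Hgc]].
    exists (g 2).
    assert (G0 : g 0 = x) by (rewrite Hgc; [auto|lra]).
    assert (G1 : g 1 = y) by (rewrite Hgc; [auto|lra]).
    rewrite <- G0, <- G1. rewrite !Hg. split; [rewrite Rabs_left1|rewrite Rabs_right]; lra.
  - intros [Hle [z [Hz2 Hzy]]].
    pose proof (Ht x y z). rewrite (Hsym y z) in *. lra.
Qed.

Theorem lemma1 (X : Type) (d d' : X -> X -> R) :
  is_metric d -> locally_compact d -> geodesically_complete d -> CAT0 d ->
  connected_at_infinity d ->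
  is_metric d' -> locally_compact d' -> geodesically_complete d' -> CAT0 d' ->
  (forall x y, d x y <= 1 <-> d' x y <= 1) ->
  forall (n : nat) (x y : X),
    (d x y <= INR n <-> d' x y <= INR n) /\
    (d x y = INR n <-> d' x y = INR n) /\
    (d x y < INR n <-> d' x y < INR n).
Proof.
  intros Hm _ Hgc Hcat _ Hm' _ Hgc' Hcat' H1.
  assert (LE : forall k a b, d a b <= INR k <-> d' a b <= INR k).
  { intros k a b. rewrite (le_reach d Hm (proj1 Hgc)), (le_reach d' Hm' (proj1 Hgc')).
    apply reach_iff. auto. }
  assert (EQ2 : forall m a b, d a b = INR (S (S m)) <-> d' a b = INR (S (S m))).
  { intros m a b. rewrite (eq2 d Hm Hcat), (eq2 d' Hm' Hcat'), LE.
    split; intros [A [B C]]; split; auto; split; auto; intros [z1 [z2 [D [E [F [G I]]]]]];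
    apply C; exists z1, z2; repeat split; auto; try apply H1; auto; apply LE; auto. }
  assert (EQ : forall k a b, d a b = INR k <-> d' a b = INR k).
  { intros [|[|m]] a b.
    - simpl. pose proof Hm as [H0 [Hz _]]. pose proof Hm' as [H0' [Hz' _]].
      rewrite Hz, Hz'; tauto.
    - replace (INR 1) with 1 by (simpl; ring).
      rewrite (eq1 d Hm Hgc), (eq1 d' Hm' Hgc'), H1.
      split; intros [A [z [B C]]]; split; auto; exists z; split;
        try apply EQ2; auto; apply H1; auto.
    - apply EQ2. }
  intros n x y. split; [apply LE|split; [apply EQ|]].
  pose proof (LE n x y). pose proof (EQ n x y).
  split; intro Hl.
  - assert (A : d' x y <= INR n) by (apply H; lra).
    destruct (Rle_lt_or_eq_dec _ _ A) as [B|B]; auto.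
    apply H0 in B; lra.
  - assert (A : d x y <= INR n) by (apply H; lra).
    destruct (Rle_lt_or_eq_dec _ _ A) as [B|B]; auto.
    apply H0 in B; lra.
Qed.
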